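(* Let $0<q<1$ and let $|0\rangle$ be the normalized infinite-volume kink ground state with renormalized total $S^3$ equal to $0$. For every integer $x>0$, $$\langle 0|S^3_x|0\rangle=-\tfrac12+q^{2x}\sum_{k=0}^\infty(-1)^kq^{k(k+2x+1)}.$$ For every integer $x\le0$, $\langle0|S^3_x|0\rangle=-\langle0|S^3_{1-x}|0\rangle$. Moreover, there exist constants $C,c>0$ depending only on $q$ such that $p(m):=\langle0|S^3_{m-1}-S^3_m|0\rangle$ satisfies $0\le p(m)\le Ce^{-c|m|}$ for all $m\in\mathbb Z$.
   Context: Fix $0<q<1$, related to the anisotropy by $q+q^{-1}=2\Delta$ with $\Delta>1$. Let $\Omega^{+-}=\bigotimes_{x\le0}|\!\uparrow\rangle\otimes\bigotimes_{x>0}|\!\downarrow\rangle$, and let $\mathcal H$ be the incomplete tensor product space generated from it. Define the grand-canonical vector $$\psi(z)=\prod_{x\le0}(1+z^{-1}q^{-x}S^-_x)\prod_{x\ge1}(1+zq^{x}S^+_x)\,\Omega^{+-}$$ for $z\neq0$. Expand it as $\psi(z)=\sum_{n\in\mathbb Z}\psi_nz^n$. Explicitly, $\psi_n$ is the sum, over finite sets $A\subset\{x\le0\}$ and $B\subset\{x\ge1\}$ with $|B|-|A|=n$, of $\prod_{x\in A}q^{|x|}\prod_{y\in B}q^{y}$ times the vector obtained from $\Omega^{+-}$ by flipping the spins in $A\cup B$. The vector $\psi_n$ has renormalized total $S^3$ equal to $n$. The kink ground states are $|n\rangle=\psi_n/\|\psi_n\|$, $n\in\mathbb Z$. *)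

(* Defs.v *)
From HB Require Import structures.
From mathcomp Require Import all_boot all_order all_algebra.
From mathcomp Require Import finmap.
From mathcomp Require Import all_classical all_reals all_analysis.
Set Implicit Arguments. Unset Strict Implicit. Unset Printing Implicit Defensive.
Import Order.TTheory GRing.Theory Num.Theory numFieldNormedType.Exports.
Local Open Scope ring_scope.
Local Open Scope classical_set_scope.

(* A basis vector of the incomplete tensor product space generated from
   Omega^{+-} is determined by the finite set of flipped sites; we split it as
   (A, B) with A the flipped sites x <= 0 and B the flipped sites x >= 1. *)
Definition config := ({fset int} * {fset int})%type.

Definition kink_configs (n : int) : set config :=
  [set c | (forall a, a \in c.1 -> a <= 0) /\ (forall b, b \in c.2 -> 0 < b)
           /\ ((#|` c.2|%fset)%:Z - (#|` c.1|%fset)%:Z = n)].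

(* Coefficient of the basis vector c in psi_n :
   prod_{x in A} q^{|x|} prod_{y in B} q^{y}. *)
Definition weight {R : realType} (q : R) (c : config) : R :=
  q ^+ ((\sum_(a <- c.1) absz a) + (\sum_(b <- c.2) absz b))%N.

Definition spin_up (x : int) (c : config) : bool :=
  if x <= 0 then x \notin c.1 else x \in c.2.

(* <n| S^3_x |n> with |n> = psi_n / ||psi_n||, computed in the orthonormal
   product basis: (sum_c w(c)^2 s_x(c)) / (sum_c w(c)^2). *)
Definition kink_expect {R : realType} (q : R) (n : int) (x : int) : R :=
  let Z := esum (kink_configs n) (fun c => ((weight q c) ^+ 2)%:E) in
  let Up := esum (kink_configs n `&` [set c | spin_up x c])
                 (fun c => ((weight q c) ^+ 2)%:E) in
  let Down := esum (kink_configs n `&` [set c | ~~ spin_up x c])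
                 (fun c => ((weight q c) ^+ 2)%:E) in
  (2^-1 * fine Up - 2^-1 * fine Down) / fine Z.

(* Main.v *)
Require Import Defs.
From HB Require Import structures.
From mathcomp Require Import all_boot all_order all_algebra.
From mathcomp Require Import finmap.
From mathcomp Require Import all_classical all_reals all_analysis.
From mathcomp Require Import zify lra.
Import Order.TTheory GRing.Theory Num.Theory numFieldNormedType.Exports.
Set Implicit Arguments. Unset Strict Implicit. Unset Printing Implicit Defensive.
Local Open Scope ring_scope.
Definition ee (c : config) : nat :=
  (\sum_(a <- c.1) absz a + \sum_(b <- c.2) absz b)%N.
Definition has (x : int) (c : config) : bool :=
  if x <= 0 then x \in c.1 else x \in c.2.
Definition ins (x : int) (c : config) : config :=
  if x <= 0 then ((x |` c.1)%fset, c.2) else (c.1, (x |` c.2)%fset).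
Definition rem (x : int) (c : config) : config :=
  if x <= 0 then ((c.1 `\ x)%fset, c.2) else (c.1, (c.2 `\ x)%fset).
Definition dch (x : int) : int := if x <= 0 then -1 else 1.
Definition chg (c : config) : int := (#|` c.2|%fset)%:Z - (#|` c.1|%fset)%:Z.

Lemma has_ins x c : has x (ins x c).
Proof. by rewrite /has /ins; case: (x <= 0) => /=; exact: fset1U1. Qed.

Lemma has_ins_neq x y c : y != x -> has y (ins x c) = has y c.
Proof.
move=> yx; rewrite /has /ins; case: (x <= 0); case: (y <= 0) => //=;
by rewrite in_fset1U (negbTE yx).
Qed.

Lemma has_rem x c : ~~ has x (rem x c).
Proof. by rewrite /has /rem; case: (x <= 0) => /=; rewrite in_fsetD1 eqxx. Qed.

Lemma has_rem_neq x y c : y != x -> has y (rem x c) = has y c.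
Proof.
move=> yx; rewrite /has /rem; case: (x <= 0); case: (y <= 0) => //=;
by rewrite in_fsetD1 yx.
Qed.

Lemma ins_rem x c : has x c -> ins x (rem x c) = c.
Proof. by case: c => A B; rewrite /has /ins /rem; case: (x <= 0) => /= h; rewrite fsetD1K. Qed.

Lemma rem_ins x c : ~~ has x c -> rem x (ins x c) = c.
Proof. by case: c => A B; rewrite /has /ins /rem; case: (x <= 0) => /= h; rewrite fsetU1K. Qed.

Lemma ee_ins x c : ~~ has x c -> ee (ins x c) = (absz x + ee c)%N.
Proof.
case: c => A B; rewrite /has /ins /ee; case: (x <= 0) => /= h; rewrite big_fsetU1 //=.
  by rewrite addnA.
by rewrite addnCA.
Qed.

Lemma chg_ins x c : ~~ has x c -> chg (ins x c) = chg c + dch x.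
Proof.
case: c => A B; rewrite /has /ins /chg /dch; case: (x <= 0) => /= h;
rewrite cardfsU1 h /=; lia.
Qed.

Definition valid (c : config) :=
  (forall a, a \in c.1 -> a <= 0) /\ (forall b, b \in c.2 -> 0 < b).

Lemma K_valid n c : kink_configs n c -> valid c.
Proof. by case=> [h1 [h2 _]]. Qed.

Lemma K_chg n c : kink_configs n c -> chg c = n.
Proof. by case=> [h1 [h2 h3]]. Qed.

Lemma K_mk n c : valid c -> chg c = n -> kink_configs n c.
Proof. by case=> h1 h2 h3; split=> //; split. Qed.

Lemma valid_ins x c : valid c -> valid (ins x c).
Proof.
case: c => A B [h1 h2]; rewrite /ins; case: ifP => hx; split => /= y.
- by case/fset1UP => [->|/h1].
- exact: h2.
- exact: h1.
- by case/fset1UP => [->|/h2]//; rewrite ltNge hx.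
Qed.

Lemma valid_rem x c : valid c -> valid (rem x c).
Proof.
case: c => A B [h1 h2]; rewrite /rem; case: ifP => hx; split => /= y.
- by case/fsetD1P => _; apply: h1.
- exact: h2.
- exact: h1.
- by case/fsetD1P => _; apply: h2.
Qed.

Lemma chg_rem x c : has x c -> chg (rem x c) = chg c - dch x.
Proof.
move=> h; have := @chg_ins x (rem x c) (has_rem x c); rewrite ins_rem // => ->; lia.
Qed.

Lemma K_ins x n c : kink_configs n c -> ~~ has x c ->
  kink_configs (n + dch x) (ins x c).
Proof.
move=> Kc h; apply: K_mk; first exact: valid_ins (K_valid Kc).
by rewrite chg_ins // (K_chg Kc).
Qed.

Lemma K_rem x n c : kink_configs n c -> has x c ->
  kink_configs (n - dch x) (rem x c).
Proof.
move=> Kc h; apply: K_mk; first exact: valid_rem (K_valid Kc).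
by rewrite chg_rem // (K_chg Kc).
Qed.

Definition W {R : realType} (q : R) (c : config) : \bar R := ((weight q c) ^+ 2)%:E.

Lemma W_ge0 {R : realType} (q : R) c : (0 <= W q c)%E.
Proof. by rewrite /W lee_fin sqr_ge0. Qed.

Lemma weightE {R : realType} (q : R) c : weight q c = q ^+ ee c.
Proof. by []. Qed.

Lemma W_ins {R : realType} (q : R) x c : ~~ has x c ->
  W q (ins x c) = (((q ^+ 2) ^+ absz x)%:E * W q c)%E.
Proof.
move=> h; rewrite /W !weightE ee_ins // -EFinM; congr EFin.
by rewrite exprD exprMn -!exprM mulnC.
Qed.

Lemma esumZ {R : realType} (T : choiceType) (S : set T) (f : T -> \bar R) (r : R) :
  0 <= r -> (forall x, (0 <= f x)%E) ->
  esum S (fun x => r%:E * f x)%E = (r%:E * esum S f)%E.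
Proof.
move=> r0 f0; rewrite /esum -ereal_supZl //; last first.
  by apply/set0P; exists (\sum_(x \in set0) f x)%E; exists set0 => //; exact: fsets_set0.
congr ereal_sup; apply/seteqP; split => y /=.
- case=> A hA <-; exists (\sum_(x \in A) f x)%E; first by exists A.
  by rewrite ge0_mule_fsumr.
- case=> _ [A hA <-] <-; exists A => //; by rewrite ge0_mule_fsumr.
Qed.

Lemma esum_sub {R : realType} (T : choiceType) (S S' : set T) (f : T -> \bar R) :
  (S `<=` S')%classic -> (esum S f <= esum S' f)%E.
Proof.
move=> SS; apply: ge_ereal_sup => _ [A [finA AS] <-]; apply: ereal_sup_ubound.
by exists A => //; split => //; exact: subset_trans AS SS.
Qed.

Lemma esum_ins_gen {R : realType} (q : R) x (P P' : set config) :
  (forall c, P c -> has x c -> P' (rem x c)) ->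
  (forall c, P' c -> ~~ has x c -> P (ins x c)) ->
  esum (P `&` [set c | has x c])%classic (W q) =
  (((q ^+ 2) ^+ absz x)%:E * esum (P' `&` [set c | ~~ has x c])%classic (W q))%E.
Proof.
move=> hPP' hP'P.
have -> : (P `&` [set c | has x c] = ins x @` (P' `&` [set c | ~~ has x c]))%classic.
  apply/seteqP; split => c /=.
  - case=> Pc hc; exists (rem x c); last exact: ins_rem.
    by split; [exact: hPP' | exact: has_rem].
  - by case=> d [P'd hd] <-; split; [exact: hP'P | exact: has_ins].
rewrite esum_image; last first.
  move=> a b; rewrite !inE => -[_ ha] [_ hb] e.
  by rewrite -(rem_ins ha) e rem_ins.
rewrite -esumZ; last exact: W_ge0; last by rewrite exprn_ge0 // sqr_ge0.
by apply: eq_esum => c [_ hc]; exact: W_ins.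
Qed.

Lemma esum_insK {R : realType} (q : R) x n (Q : set config) :
  (forall c, ~~ has x c -> Q (ins x c) <-> Q c) ->
  esum (kink_configs n `&` Q `&` [set c | has x c])%classic (W q) =
  (((q ^+ 2) ^+ absz x)%:E *
     esum (kink_configs (n - dch x) `&` Q `&` [set c | ~~ has x c])%classic (W q))%E.
Proof.
move=> hQ; apply: esum_ins_gen => c [Kc Qc] hc.
- split; first exact: K_rem.
  by apply/(hQ _ (has_rem x c)); rewrite ins_rem.
- split; first by have := K_ins Kc hc; rewrite subrK.
  exact/hQ.
Qed.

Lemma setC_has x : (~` [set c | has x c] = [set c | ~~ has x c])%classic.
Proof. by apply/seteqP; split => c /=; case: (has x c). Qed.

Lemma esum_split {R : realType} (q : R) (S : set config) x :
  esum S (W q) = (esum (S `&` [set c | has x c])%classic (W q) +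
                  esum (S `&` [set c | ~~ has x c])%classic (W q))%E.
Proof. by rewrite (esumID [set c | has x c]) ?setC_has // => c _; exact: W_ge0. Qed.

Lemma esum_dbl {R : realType} (q : R) (S : set config) x :
  (forall c, S c -> has x c -> S (rem x c)) ->
  (forall c, S c -> ~~ has x c -> S (ins x c)) ->
  esum S (W q) = ((1 + (q ^+ 2) ^+ absz x)%:E *
                   esum (S `&` [set c | ~~ has x c])%classic (W q))%E.
Proof.
move=> h1 h2; rewrite (esum_split q S x) (esum_ins_gen q h1 h2) EFinD.
rewrite ge0_muleDl ?mul1e; first by rewrite addeC.
  by [].
by rewrite lee_fin exprn_ge0 // sqr_ge0.
Qed.

Definition Wn (N : nat) : set config :=
  [set c | (forall a, a \in c.1 -> - (N%:Z) <= a <= 0) /\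
           (forall b, b \in c.2 -> 0 < b <= N%:Z)].

Lemma Wn_rem N x c : Wn N c -> Wn N (rem x c).
Proof.
case: c => A B [h1 h2]; rewrite /rem; case: ifP => _; split => /= y.
- by case/fsetD1P => _; apply: h1.
- exact: h2.
- exact: h1.
- by case/fsetD1P => _; apply: h2.
Qed.

Lemma Wn_ins N x c : (absz x <= N)%N -> Wn N c -> Wn N (ins x c).
Proof.
move=> hx; case: c => A B [h1 h2]; rewrite /ins; case: ifP => hx0; split => /= y.
- by case/fset1UP => [->|/h1] //; apply/andP; split => //; lia.
- exact: h2.
- exact: h1.
- by case/fset1UP => [->|/h2] //; apply/andP; split; lia.
Qed.

Lemma Wn0_empty c : Wn 0 c -> ~~ has 0 c -> c = (fset0, fset0).
Proof.
case: c => A B [h1 h2]; rewrite /has /= => h0.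
have eA : A = fset0.
  apply/fsetP => y; rewrite in_fset0; apply/negbTE/negP => yA.
  have := h1 _ yA => hy; have y0 : y = 0 by lia.
  by rewrite -y0 yA in h0.
have eB : B = fset0.
  by apply/fsetP => y; rewrite in_fset0; apply/negbTE/negP => /h2 => hy; lia.
by rewrite eA eB.
Qed.

Lemma W_empty {R : realType} (q : R) : W q (fset0, fset0) = 1%E.
Proof. by rewrite /W weightE /ee /= !big_seq_fset0 addn0 expr0 expr1n. Qed.

Lemma esum_Wn0 {R : realType} (q : R) : (esum (Wn 0) (W q) <= (1 + 1)%:E)%E.
Proof.
rewrite (esum_dbl q (x := 0)); last 2 first.
- by move=> c Wc _; exact: Wn_rem.
- by move=> c Wc _; exact: Wn_ins.
rewrite expr0 -[leRHS]mule1; apply: lee_pmul => //.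
- by apply: esum_ge0 => c _; exact: W_ge0.
apply: le_trans (esum_sub (W q) (S' := [set (fset0, fset0)]) _) _.
  by move=> c [Wc hc] /=; exact: Wn0_empty.
rewrite esum_set1; [by have := W_empty q; rewrite /W => -> | exact: W_ge0].
Qed.

Lemma esum_Wn_step {R : realType} (q : R) N :
  (esum (Wn N.+1) (W q) <= ((1 + (q ^+ 2) ^+ N.+1)%:E *
     ((1 + (q ^+ 2) ^+ N.+1)%:E * esum (Wn N) (W q))))%E.
Proof.
set x1 : int := - (N.+1%:Z); set x2 : int := N.+1%:Z.
have a1 : absz x1 = N.+1 by rewrite /x1; lia.
have a2 : absz x2 = N.+1 by [].
have x12 : x2 != x1 by rewrite /x1 /x2; apply/eqP; lia.
rewrite (esum_dbl q (x := x1)); last 2 first.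
- by move=> c Wc _; exact: Wn_rem.
- by move=> c Wc _; apply: Wn_ins => //; rewrite a1.
rewrite (esum_dbl q (S := Wn N.+1 `&` _) (x := x2)); last 2 first.
- move=> c [Wc h1] _; split; first exact: Wn_rem.
  by rewrite /= has_rem_neq // eq_sym.
- move=> c [Wc h1] _; split; first by apply: Wn_ins => //; rewrite a2.
  by rewrite /= has_ins_neq // eq_sym.
rewrite a1 a2; apply: lee_wpmul2l; first by rewrite lee_fin addr_ge0 // exprn_ge0 // sqr_ge0.
apply: lee_wpmul2l; first by rewrite lee_fin addr_ge0 // exprn_ge0 // sqr_ge0.
apply: esum_sub => -[A B] [[[h1 h2] n1] n2] /=.
move: n1 n2; rewrite /has /x1 /x2 /=.
move=> n1 n2; split => y hy.
- have := h1 y hy => hh; have yn : y != - (N.+1%:Z) by apply: contraNneq n1 => <-.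
  lia.
- have := h2 y hy => hh; have yn : y != N.+1%:Z by apply: contraNneq n2 => <-.
  lia.
Qed.

Definition gs {R : realType} (p : R) (N : nat) : R := \sum_(j < N) p ^+ j.+1.

Lemma esum_Wn_bound {R : realType} (q : R) N :
  (esum (Wn N) (W q) <= (2 * expR (2 * gs (q ^+ 2) N))%:E)%E.
Proof.
elim: N => [|N IH].
  by rewrite /gs big_ord0 mulr0 expR0 mulr1; apply: le_trans (esum_Wn0 q) _.
apply: le_trans (esum_Wn_step q N) _.
set t := (q ^+ 2) ^+ N.+1.
have t0 : 0 <= t by rewrite exprn_ge0 // sqr_ge0.
apply: (@le_trans _ _ ((1 + t)%:E * ((1 + t)%:E * (2 * expR (2 * gs (q ^+ 2) N))%:E))%E).
  apply: lee_wpmul2l; first by rewrite lee_fin addr_ge0.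
  by apply: lee_wpmul2l; first by rewrite lee_fin addr_ge0.
rewrite -!EFinM lee_fin /gs big_ord_recr /= -/(gs _ _) -/t.
rewrite mulrDr expRD.
have h1 := expR_ge1Dx t.
have h2 : 0 < expR (2 * gs (q ^+ 2) N) := expR_gt0 _.
have -> : expR (2 * t) = expR t * expR t by rewrite mulrDl mul1r expRD.
have h3 : (1 + t) * (1 + t) <= expR t * expR t.
  by apply: ler_pM => //; rewrite addr_ge0.
set e := expR (2 * _).
rewrite [leLHS]mulrA [leLHS]mulrC [leRHS]mulrA; apply: ler_wpM2l => //.
by apply/ltW/mulr_gt0.
Qed.

Lemma gs_eq {R : realType} (p : R) N : gs p N * (1 - p) = p - p ^+ N.+1.
Proof.
elim: N => [|N IH]; first by rewrite /gs big_ord0 mul0r expr1 subrr.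
by rewrite /gs big_ord_recr /= mulrDl -/(gs _ _) IH !exprS; lra.
Qed.

Lemma gs_le {R : realType} (p : R) N : 0 <= p < 1 -> gs p N <= p / (1 - p).
Proof.
move=> /andP[p0 p1]; rewrite ler_pdivlMr ?subr_gt0 // gs_eq.
by rewrite lerBlDr lerDl exprn_ge0.
Qed.

Lemma finite_in_Wn (F : set config) n : finite_set F ->
  (F `<=` kink_configs n)%classic -> exists N, (F `<=` Wn N)%classic.
Proof.
move=> finF FK.
pose mx (c : config) := (\max_(s <- (c.1 `|` c.2)%fset) absz s)%N.
exists (\max_(c <- fset_set F) mx c)%N => c Fc.
have hc : (mx c <= \max_(c <- fset_set F) mx c)%N.
  by apply: leq_bigmax_seq => //; rewrite in_fset_set // inE.
have [h1 [h2 _]] := FK c Fc.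
split => [a ha | b hb].
- have := h1 a ha => ha0.
  have : (absz a <= mx c)%N by apply: leq_bigmax_seq => //; rewrite in_fsetU ha.
  move: hc; set M := (\max_(_ <- _) _)%N; move=> hc hm.
  apply/andP; split => //; lia.
- have := h2 b hb => hb0.
  have : (absz b <= mx c)%N by apply: leq_bigmax_seq => //; rewrite in_fsetU hb orbT.
  move: hc; set M := (\max_(_ <- _) _)%N; move=> hc hm.
  apply/andP; split => //; lia.
Qed.

Lemma esum_K_bound {R : realType} (q : R) n : 0 <= q ^+ 2 < 1 ->
  (esum (kink_configs n) (W q) <= (2 * expR (2 * (q ^+ 2 / (1 - q ^+ 2))))%:E)%E.
Proof.
move=> hp; apply: ge_ereal_sup => _ [F [finF FK] <-].
have [N FN] := finite_in_Wn finF FK.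
apply: (@le_trans _ _ (esum (Wn N) (W q))).
  by apply: ereal_sup_ubound; exists F.
apply: le_trans (esum_Wn_bound q N) _.
rewrite lee_fin ler_pM2l // ler_expR ler_pM2l //.
exact: gs_le.
Qed.

Lemma inj1m : injective (fun x : int => 1 - x).
Proof. by move=> a b /= h; lia. Qed.

Lemma mem_1m (A : {fset int}) y : (y \in [fset 1 - x | x in A]%fset) = (1 - y \in A).
Proof.
have e : y = 1 - (1 - y) by lia.
by rewrite {1}e; exact: (mem_imfset _ _ inj1m).
Qed.

Definition refl (c : config) : config :=
  ([fset 1 - x | x in c.2]%fset, [fset 1 - x | x in c.1]%fset).

Lemma refl_K c : refl (refl c) = c.
Proof.
case: c => A B; rewrite /refl /=; congr pair; apply/fsetP => y;
by rewrite !mem_1m; have -> : 1 - (1 - y) = y by lia.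
Qed.

Lemma has_refl x c : has x (refl c) = has (1 - x) c.
Proof.
rewrite /has /refl /= !mem_1m.
have -> : (1 - x <= 0) = ~~ (x <= 0) by lia.
by case: (x <= 0).
Qed.

Lemma valid_refl c : valid c -> valid (refl c).
Proof.
case: c => A B [h1 h2]; split => /= y; rewrite mem_1m.
- by move=> /h2; lia.
- by move=> /h1; lia.
Qed.

Lemma card_1m (A : {fset int}) : #|` [fset 1 - x | x in A]%fset| = #|` A|.
Proof. by rewrite card_imfset //; exact: inj1m. Qed.

Lemma sum_1m (A : {fset int}) (F : int -> nat) :
  (\sum_(y <- [fset (1 - x)%R | x in A]%fset) F y = \sum_(x <- A) F (1 - x)%R)%N.
Proof. by rewrite big_imfset //= => ? ? _ _; exact: inj1m. Qed.

Lemma chg_refl c : chg (refl c) = - chg c.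
Proof. by rewrite /chg /refl /= !card_1m opprB. Qed.

Lemma ee_refl c : valid c -> (ee (refl c) + #|` c.2|)%N = (ee c + #|` c.1|)%N.
Proof.
case: c => A B [h1 h2]; rewrite /ee /refl /= !sum_1m.
have hB : (\sum_(b <- B) `|(1 - b)%R| + #|` B| = \sum_(b <- B) `|b|)%N.
  rewrite card_fset_sum1 -big_split /=; apply: eq_big_seq => b hb.
  by have := h2 b hb; lia.
have hA : (\sum_(a <- A) `|(1 - a)%R| = \sum_(a <- A) `|a| + #|` A|)%N.
  rewrite card_fset_sum1 -big_split /=; apply: eq_big_seq => a ha.
  by have := h1 a ha; lia.
rewrite -hB hA.
move: (\sum_(a <- A) `|a|)%N (\sum_(b <- B) `|(1 - b)%R|)%N #|` A| #|` B| => ? ? ? ?.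
lia.
Qed.

Lemma K0_refl c : kink_configs 0 c -> kink_configs 0 (refl c).
Proof.
move=> Kc; apply: K_mk; first exact/valid_refl/(K_valid Kc).
by rewrite chg_refl (K_chg Kc).
Qed.

Lemma W_refl {R : realType} (q : R) c : kink_configs 0 c -> W q (refl c) = W q c.
Proof.
move=> Kc; have he := ee_refl (K_valid Kc); have hc := K_chg Kc; rewrite /chg in hc.
have e : ee (refl c) = ee c by lia.
by rewrite /W !weightE e.
Qed.

Lemma H_refl {R : realType} (q : R) x :
  esum (kink_configs 0 `&` [set c | has x c])%classic (W q) =
  esum (kink_configs 0 `&` [set c | has (1 - x) c])%classic (W q).
Proof.
rewrite (reindex_esum (kink_configs 0 `&` [set c | has (1 - x) c])%classic
                      (kink_configs 0 `&` [set c | has x c])%classic refl).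
  by apply: eq_esum => c [Kc _]; exact: W_refl.
split.
- by move=> c [Kc hc]; split; [exact: K0_refl | rewrite /= has_refl].
- by move=> a b _ _ e; rewrite -(refl_K a) e refl_K.
- move=> c [Kc hc]; exists (refl c); last exact: refl_K.
  split; first exact: K0_refl.
  by rewrite /= has_refl; have -> : 1 - (1 - x) = x by lia.
Qed.

Lemma injm1 : injective (fun x : int => x - 1).
Proof. by move=> a b /= h; lia. Qed.
Lemma injp1 : injective (fun x : int => x + 1).
Proof. by move=> a b /= h; lia. Qed.

Lemma mem_m1 (A : {fset int}) y : (y \in [fset (x - 1)%R | x in A]%fset) = (y + 1 \in A).
Proof.
have e : y = (y + 1) - 1 by lia.
by rewrite {1}e; exact: (mem_imfset _ _ injm1).
Qed.

Lemma mem_p1 (A : {fset int}) y : (y \in [fset (x + 1)%R | x in A]%fset) = (y - 1 \in A).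
Proof.
have e : y = (y - 1) + 1 by lia.
by rewrite {1}e; exact: (mem_imfset _ _ injp1).
Qed.

Lemma card_m1 (A : {fset int}) : #|` [fset (x - 1)%R | x in A]%fset| = #|` A|.
Proof. by rewrite card_imfset //; exact: injm1. Qed.
Lemma card_p1 (A : {fset int}) : #|` [fset (x + 1)%R | x in A]%fset| = #|` A|.
Proof. by rewrite card_imfset //; exact: injp1. Qed.

Lemma sum_m1 (A : {fset int}) (F : int -> nat) :
  (\sum_(y <- [fset (x - 1)%R | x in A]%fset) F y = \sum_(x <- A) F (x - 1)%R)%N.
Proof. by rewrite big_imfset //= => ? ? _ _; exact: injm1. Qed.
Lemma sum_p1 (A : {fset int}) (F : int -> nat) :
  (\sum_(y <- [fset (x + 1)%R | x in A]%fset) F y = \sum_(x <- A) F (x + 1)%R)%N.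
Proof. by rewrite big_imfset //= => ? ? _ _; exact: injp1. Qed.

Definition tau (c : config) : config :=
  (if 1 \in c.2 then [fset (a - 1)%R | a in c.1]%fset
   else (0 |` [fset (a - 1)%R | a in c.1])%fset,
   [fset (b - 1)%R | b in (c.2 `\ 1)%fset]%fset).

Definition sig (c : config) : config :=
  ([fset (a + 1)%R | a in (c.1 `\ 0)%fset]%fset,
   if 0 \in c.1 then [fset (b + 1)%R | b in c.2]%fset
   else (1 |` [fset (b + 1)%R | b in c.2])%fset).

Lemma valid_tau c : valid c -> valid (tau c).
Proof.
case: c => A B [h1 h2]; rewrite /tau /=; split => /= y.
- case: (1 \in B); rewrite ?in_fset1U mem_m1.
    by move/h1; lia.
  by case/orP => [/eqP -> //| /h1]; lia.
- by rewrite mem_m1 in_fsetD1 => /andP[y1 /h2]; move: y1; lia.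
Qed.

Lemma valid_sig c : valid c -> valid (sig c).
Proof.
case: c => A B [h1 h2]; rewrite /sig /=; split => /= y.
- by rewrite mem_p1 in_fsetD1 => /andP[y1 /h1]; move: y1; lia.
- case: (0 \in A); rewrite ?in_fset1U mem_p1.
    by move/h2; lia.
  by case/orP => [/eqP -> //| /h2]; lia.
Qed.

Lemma p1eq (y : int) : (y + 1 == 1) = (y == 0).
Proof. by apply/idP/idP => /eqP h; apply/eqP; lia. Qed.

Lemma m1eq (y : int) : (y - 1 == 0) = (y == 1).
Proof. by apply/idP/idP => /eqP h; apply/eqP; lia. Qed.

Lemma tau_sig c : valid c -> tau (sig c) = c.
Proof.
case: c => A B [h1 h2]; rewrite /tau /sig /=.
have B0 : (0 \in B) = false by apply/negP => /h2.
have -> : (1 \in (if 0 \in A then [fset (b + 1)%R | b in B] else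
              1 |` [fset (b + 1)%R | b in B])%fset) = (0 \notin A).
  by case: (0 \in A); rewrite ?in_fset1U mem_p1 subrr ?B0 ?eqxx.
congr pair; apply/fsetP => y.
- case hA: (0 \in A) => /=; rewrite ?in_fset1U mem_m1 mem_p1 in_fsetD1 addrK.
    by have [->|y0] := eqVneq y 0; rewrite ?hA //= (negbTE y0).
  by have [->|y0] := eqVneq y 0; rewrite ?hA.
- case: (0 \in A); rewrite mem_m1 in_fsetD1 ?in_fset1U mem_p1 addrK p1eq.
    by have [->|y0] := eqVneq y 0; rewrite ?B0.
  by have [->|y0] := eqVneq y 0; rewrite ?B0.
Qed.

Lemma sig_tau c : valid c -> sig (tau c) = c.
Proof.
case: c => A B [h1 h2]; rewrite /tau /sig /=.
have A1 : (1 \in A) = false by apply/negP => /h1.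
have -> : (0 \in (if 1 \in B then [fset (a - 1)%R | a in A] else
              0 |` [fset (a - 1)%R | a in A])%fset) = (1 \notin B).
  by case: (1 \in B); rewrite ?in_fset1U mem_m1 add0r ?A1 ?eqxx.
congr pair; apply/fsetP => y.
- case: (1 \in B); rewrite mem_p1 in_fsetD1 ?in_fset1U mem_m1 subrK m1eq.
    by have [->|y0] := eqVneq y 1; rewrite ?A1.
  by have [->|y0] := eqVneq y 1; rewrite ?A1.
- case hB: (1 \in B) => /=; rewrite ?in_fset1U mem_p1 mem_m1 in_fsetD1 subrK.
    by have [->|y0] := eqVneq y 1; rewrite ?hB //= (negbTE y0).
  by have [->|y0] := eqVneq y 1; rewrite ?hB.
Qed.

Lemma fsetD1_notin (B : {fset int}) (x : int) : x \notin B -> (B `\ x)%fset = B.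
Proof.
move=> hx; apply/fsetP => y; rewrite in_fsetD1.
by have [->|] := eqVneq y x; rewrite ?(negbTE hx).
Qed.

Lemma chg_tau c : valid c -> chg (tau c) = chg c - 1.
Proof.
case: c => A B [h1 h2]; rewrite /chg /tau /=.
have A0 : (0 \in [fset (a - 1)%R | a in A]%fset) = false.
  by rewrite mem_m1 add0r; apply/negP => /h1.
have hB := cardfsD1 1 B.
case h1B: (1 \in B); rewrite ?cardfsU1 ?A0 !card_m1 /=; move: hB; rewrite h1B /=.
  move: #|` A| #|` B| #|` (B `\ 1)%fset| => a b d; lia.
move: #|` A| #|` B| #|` (B `\ 1)%fset| => a b d; lia.
Qed.

Lemma ee_tau c : valid c -> (ee (tau c) + #|` c.2|)%N = (ee c + #|` c.1|)%N.
Proof.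
case: c => A B [h1 h2]; rewrite /ee /tau /=.
have A0 : (0 \in [fset (a - 1)%R | a in A]%fset) = false.
  by rewrite mem_m1 add0r; apply/negP => /h1.
have hA : (\sum_(a <- A) `|(a - 1)%R| = \sum_(a <- A) `|a| + #|` A|)%N.
  rewrite card_fset_sum1 -big_split /=; apply: eq_big_seq => a ha.
  by have := h1 a ha; lia.
have hB' : (\sum_(b <- (B `\ (1:int))%fset) `|(b - 1)%R| + #|` (B `\ (1:int))%fset| =
            \sum_(b <- (B `\ (1:int))%fset) `|b|)%N.
  rewrite card_fset_sum1 -big_split /=; apply: eq_big_seq => b.
  by rewrite in_fsetD1 => /andP[b1 /h2]; move: b1; lia.
have hBs : (\sum_(b <- B) `|b| = ((1:int) \in B) + \sum_(b <- (B `\ (1:int))%fset) `|b|)%N.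
  case h1B: ((1:int) \in B); first by rewrite (big_fsetD1 (1:int)) //.
  by rewrite fsetD1_notin ?h1B.
have hc := cardfsD1 1 B.
have e1 : (\sum_(y <- (if (1:int) \in B then [fset (a - 1)%R | a in A]%fset
                     else ((0:int) |` [fset (a - 1)%R | a in A])%fset)) `|y|
          = \sum_(a <- A) `|(a - 1)%R|)%N.
  case: ((1:int) \in B); rewrite ?big_fsetU1 ?A0 // sum_m1 //.
rewrite e1 sum_m1 hBs hA -hB' hc.
move: (\sum_(a <- A) `|a|)%N (\sum_(b <- (B `\ (1:int))%fset) `|(b - 1)%R|)%N
  #|` A| #|` (B `\ (1:int))%fset| ((1:int) \in B) => ? ? ? ? [|] /=; lia.
Qed.

Lemma Z_shift {R : realType} (q : R) (j : nat) :
  esum (kink_configs (- (j%:Z) - 1)) (W q) =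
  (((q ^+ 2) ^+ j)%:E * esum (kink_configs (- (j%:Z))) (W q))%E.
Proof.
rewrite (reindex_esum (kink_configs (- (j%:Z))) (kink_configs (- (j%:Z) - 1)) tau).
  rewrite -esumZ; last exact: W_ge0; last by rewrite exprn_ge0 // sqr_ge0.
  apply: eq_esum => c Kc.
  have he := ee_tau (K_valid Kc); have hc := K_chg Kc; rewrite /chg in hc.
  have e : ee (tau c) = (j + ee c)%N.
    move: he hc; move: (ee (tau c)) (ee c) #|` c.1| #|` c.2| => ? ? ? ?; lia.
  rewrite /W !weightE e -EFinM; congr EFin.
  by rewrite exprD exprMn -!exprM mulnC.
split.
- move=> c Kc; apply: K_mk; first exact/valid_tau/(K_valid Kc).
  by rewrite chg_tau ?(K_chg Kc) //; exact: K_valid Kc.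
- move=> a b; rewrite !inE => Ka Kb e.
  by rewrite -(sig_tau (K_valid Ka)) e sig_tau //; exact: K_valid Kb.
- move=> c Kc; exists (sig c); last exact/tau_sig/(K_valid Kc).
  have vs := valid_sig (K_valid Kc).
  apply: K_mk => //; have := chg_tau vs; rewrite tau_sig ?(K_chg Kc); last exact: K_valid Kc.
  lia.
Qed.

Lemma fin_subK {R : realType} (q : R) n (S : set config) : 0 <= q ^+ 2 < 1 ->
  (S `<=` kink_configs n)%classic -> esum S (W q) \is a fin_num.
Proof.
move=> hp hS; rewrite ge0_fin_numE; last by apply: esum_ge0 => c _; exact: W_ge0.
have h1 := esum_sub (W q) hS.
have h2 := esum_K_bound n hp.
by apply: (le_lt_trans h1); apply: (le_lt_trans h2); exact: ltry.
Qed.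

Definition F {R : realType} (q : R) (S : set config) : R := fine (esum S (W q)).

Lemma F_ge0 {R : realType} (q : R) S : 0 <= F q S.
Proof. by apply: fine_ge0; apply: esum_ge0 => c _; exact: W_ge0. Qed.

Lemma F_split {R : realType} (q : R) n (S : set config) x : 0 <= q ^+ 2 < 1 ->
  (S `<=` kink_configs n)%classic ->
  F q S = F q (S `&` [set c | has x c])%classic + F q (S `&` [set c | ~~ has x c])%classic.
Proof.
move=> hp hS; rewrite /F (esum_split q S x) fineD //; apply: (fin_subK hp);
exact: subset_trans (@subIsetl _ _ _) hS.
Qed.

Lemma F_ins {R : realType} (q : R) x n (Q : set config) : 0 <= q ^+ 2 < 1 ->
  (forall c, ~~ has x c -> Q (ins x c) <-> Q c) ->
  F q (kink_configs n `&` Q `&` [set c | has x c])%classic =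
  (q ^+ 2) ^+ absz x * F q (kink_configs (n - dch x) `&` Q `&` [set c | ~~ has x c])%classic.
Proof.
move=> hp hQ; rewrite /F esum_insK // fineM //; apply: (fin_subK hp) => c [[Kc _] _]; exact: Kc.
Qed.

Lemma F_shift {R : realType} (q : R) (j : nat) : 0 <= q ^+ 2 < 1 ->
  F q (kink_configs (- (j%:Z) - 1)) = (q ^+ 2) ^+ j * F q (kink_configs (- (j%:Z))).
Proof.
move=> hp; rewrite /F Z_shift fineM //; apply: (fin_subK hp); exact: subset_refl.
Qed.

Lemma K0_empty : kink_configs 0 (fset0, fset0).
Proof. by apply: K_mk; [split => y /=; rewrite in_fset0 | rewrite /chg /=]. Qed.

Lemma F_Z0 {R : realType} (q : R) : 0 <= q ^+ 2 < 1 -> 1 <= F q (kink_configs 0).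
Proof.
move=> hp; rewrite /F.
have fZ : esum (kink_configs 0) (W q) \is a fin_num.
  by apply: (fin_subK hp); exact: subset_refl.
have ge : (1%E <= esum (kink_configs 0) (W q))%E.
  apply: esum_ge; exists [set (fset0, fset0)]%classic.
    by split; [exact: finite_set1 | move=> c /= ->; exact: K0_empty].
  by rewrite fsbig_set1; have := W_empty q; rewrite /W => ->.
by have := fine_le (x := 1%E) isT fZ ge.
Qed.

Lemma Q_has x y : y != x ->
  forall c, ~~ has x c -> [set c | has y c]%classic (ins x c) <-> [set c | has y c]%classic c.
Proof. by move=> yx c hc /=; rewrite has_ins_neq. Qed.

Lemma Q_nhas x y : y != x ->
  forall c, ~~ has x c -> [set c | ~~ has y c]%classic (ins x c) <-> [set c | ~~ has y c]%classic c.
Proof. by move=> yx c hc /=; rewrite has_ins_neq. Qed.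

Lemma Q_T x : forall c, ~~ has x c -> (@setT config) (ins x c) <-> setT c.
Proof. by []. Qed.

Lemma dch_pos x : 0 < x -> dch x = 1.
Proof. by rewrite /dch ltNge => /negbTE ->. Qed.
Lemma dch_npos x : x <= 0 -> dch x = -1.
Proof. by rewrite /dch => ->. Qed.

Definition Hs {R : realType} (q : R) (x : int) : R :=
  F q (kink_configs 0 `&` [set c | has x c])%classic.
Definition Zs {R : realType} (q : R) : R := F q (kink_configs 0).

Lemma F_le_split {R : realType} (q : R) n (S : set config) x : 0 <= q ^+ 2 < 1 ->
  (S `<=` kink_configs n)%classic ->
  F q (S `&` [set c | ~~ has x c])%classic <= F q S.
Proof.
move=> hp hS; rewrite (F_split x hp hS) lerDr; exact: F_ge0.
Qed.

Lemma Hs_dec {R : realType} (q : R) x : 0 <= q ^+ 2 < 1 -> 0 < x ->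
  Hs q (x + 1) <= Hs q x.
Proof.
move=> hp x0; have x10 : 0 < x + 1 by lia.
have xne : x + 1 != x by apply/eqP; lia.
have xne' : x != x + 1 by apply/eqP; lia.
rewrite /Hs (F_split (n := 0) x hp (@subIsetl _ _ _)).
rewrite [X in _ <= X](F_split (n := 0) (x + 1) hp (@subIsetl _ _ _)).
set K0 := kink_configs 0.
have e1 : (K0 `&` [set c | has (x + 1) c] `&` [set c | has x c] =
           K0 `&` [set c | has x c] `&` [set c | has (x + 1) c])%classic by rewrite setIAC.
have e2 : (K0 `&` [set c | has (x + 1) c] `&` [set c | ~~ has x c] =
           K0 `&` [set c | ~~ has x c] `&` [set c | has (x + 1) c])%classic by rewrite setIAC.
have e3 : (K0 `&` [set c | has x c] `&` [set c | ~~ has (x + 1) c] =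
           K0 `&` [set c | ~~ has (x + 1) c] `&` [set c | has x c])%classic by rewrite setIAC.
rewrite e1 e2 e3.
rewrite (F_ins (x := x + 1) 0 hp (Q_nhas xne')).
rewrite (F_ins (x := x) 0 hp (Q_nhas xne)).
rewrite dch_pos // dch_pos //.
rewrite (setIAC (kink_configs (0 - 1)) [set c | ~~ has x c]%classic).
apply: lerD => //; apply: ler_wpM2r; first exact: F_ge0.
apply: ler_wiXn2l; [exact: sqr_ge0 | by move: hp => /andP[_ /ltW] | lia].
Qed.

Lemma Hs_bound {R : realType} (q : R) x : 0 <= q ^+ 2 < 1 -> 0 < x ->
  Hs q x <= (q ^+ 2) ^+ absz x * Zs q.
Proof.
move=> hp x0; rewrite /Hs -[kink_configs 0]setIT.
rewrite (F_ins (x := x) 0 hp (@Q_T x)) setIT dch_pos //.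
apply: ler_wpM2l; first by rewrite exprn_ge0 // sqr_ge0.
apply: le_trans (F_le_split x hp (@subset_refl _ _)) _.
have -> : (0 - 1 : int) = - (0%:Z) - 1 by [].
by rewrite (F_shift 0 hp) expr0 mul1r.
Qed.

Lemma Hs01 {R : realType} (q : R) : 0 <= q ^+ 2 < 1 -> Hs q 0 + Hs q 1 <= Zs q.
Proof.
move=> hp.
have n10 : (1 : int) != 0 by [].
have n01 : (0 : int) != 1 by [].
set K0 := kink_configs 0.
have eZ := F_split (n := 0) 0 hp (@subset_refl _ K0).
have eN := F_split (n := 0) 1 hp (@subIsetl _ K0 [set c | ~~ has 0 c]%classic).
have eH1 := F_split (n := 0) 0 hp (@subIsetl _ K0 [set c | has 1 c]%classic).
have e1 : (K0 `&` [set c | has 1 c] `&` [set c | ~~ has 0 c] =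
           K0 `&` [set c | ~~ has 0 c] `&` [set c | has 1 c])%classic by rewrite setIAC.
have e2 : (K0 `&` [set c | has 1 c] `&` [set c | has 0 c] =
           K0 `&` [set c | has 0 c] `&` [set c | has 1 c])%classic by rewrite setIAC.
have i1 := F_ins (x := 1) 0 hp (Q_has n01).
have i2 := F_ins (x := 0) (0 - dch 1) hp (Q_nhas n10).
have e3 : (kink_configs (0 - dch 1) `&` [set c | has 0 c] `&` [set c | ~~ has 1 c] =
           kink_configs (0 - dch 1) `&` [set c | ~~ has 1 c] `&` [set c | has 0 c])%classic
  by rewrite setIAC.
have e4 : (0 - dch 1 - dch 0 = 0) by rewrite dch_pos // dch_npos.
have e5 : (K0 `&` [set c | ~~ has 1 c] `&` [set c | ~~ has 0 c] =
           K0 `&` [set c | ~~ has 0 c] `&` [set c | ~~ has 1 c])%classic by rewrite setIAC.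
rewrite /Hs /Zs -/K0 eZ eN eH1 e1 e2 i1 e3 i2 e4 -/K0 e5.
have g1 := F_ge0 q (K0 `&` [set c | ~~ has 0 c] `&` [set c | ~~ has 1 c])%classic.
have hq2 : (q ^+ 2) ^+ absz 1 <= 1.
  by rewrite expr1; move: hp => /andP[_ /ltW].
have hq0 : (q ^+ 2) ^+ absz 0 = 1 by [].
rewrite hq0 mul1r.
set a := F q _; set b := F q _; set d := F q _.
have : (q ^+ 2) ^+ absz 1 * b <= b by rewrite ler_piMl // F_ge0.
lra.
Qed.

Lemma Hs_refl {R : realType} (q : R) x : Hs q x = Hs q (1 - x).
Proof. by rewrite /Hs /F H_refl. Qed.

Lemma spin_upE x c : spin_up x c = if x <= 0 then ~~ has x c else has x c.
Proof. by rewrite /spin_up /has; case: (x <= 0). Qed.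

Lemma half_lem {R : realType} (U D Z : R) : U + D = Z -> Z != 0 ->
  (2^-1 * U - 2^-1 * D) / Z = U / Z - 2^-1.
Proof.
move=> e hZ; apply: (mulIf hZ); rewrite divfK // mulrBl divfK // -e; lra.
Qed.

Lemma kinkE {R : realType} (q : R) x : 0 <= q ^+ 2 < 1 ->
  kink_expect q 0 x = (if x <= 0 then Zs q - Hs q x else Hs q x) / Zs q - 2^-1.
Proof.
move=> hp; rewrite /kink_expect.
have Z0 : Zs q != 0 by apply/lt0r_neq0/(lt_le_trans ltr01)/(F_Z0 hp).
have eS := F_split (n := 0) x hp (@subset_refl _ (kink_configs 0)).
case: ifP => hx.
- have -> : [set c | spin_up x c]%classic = [set c | ~~ has x c]%classic.
    by apply/seteqP; split => c /=; rewrite spin_upE hx.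
  have -> : [set c | ~~ spin_up x c]%classic = [set c | has x c]%classic.
    by apply/seteqP; split => c /=; rewrite spin_upE hx negbK.
  have eU : Zs q - Hs q x = F q (kink_configs 0 `&` [set c | ~~ has x c])%classic.
    by rewrite /Zs /Hs eS; lra.
  rewrite eU; apply: half_lem => //.
  by move: eS; rewrite /F => ->; rewrite addrC.
- have -> : [set c | spin_up x c]%classic = [set c | has x c]%classic.
    by apply/seteqP; split => c /=; rewrite spin_upE hx.
  have -> : [set c | ~~ spin_up x c]%classic = [set c | ~~ has x c]%classic.
    by apply/seteqP; split => c /=; rewrite spin_upE hx.
  apply: half_lem => //.
Qed.

Definition Hn {R : realType} (q : R) (n : int) (x : int) : R :=
  F q (kink_configs n `&` [set c | has x c])%classic.
Definition Zn {R : realType} (q : R) (n : int) : R := F q (kink_configs n).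

Lemma Hn_rec {R : realType} (q : R) n x : 0 <= q ^+ 2 < 1 -> 0 < x ->
  Hn q n x = (q ^+ 2) ^+ absz x * (Zn q (n - 1) - Hn q (n - 1) x).
Proof.
move=> hp x0; rewrite /Hn -[kink_configs n]setIT.
rewrite (F_ins (x := x) n hp (@Q_T x)) setIT dch_pos //.
congr (_ * _); rewrite /Zn (F_split (n := n - 1) x hp (@subset_refl _ _)); lra.
Qed.

Lemma Zn_neg {R : realType} (q : R) (k : nat) : 0 <= q ^+ 2 < 1 ->
  Zn q (- (k%:Z)) = (q ^+ 2) ^+ 'C(k, 2) * Zn q 0.
Proof.
move=> hp; elim: k => [|k IH]; first by rewrite bin0n expr0 mul1r.
have -> : - (k.+1%:Z) = - (k%:Z) - 1 by lia.
rewrite /Zn (F_shift k hp) -/(Zn q _) IH mulrA -exprD binS bin1 addnC.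
by [].
Qed.

Lemma Hn_iter {R : realType} (q : R) x (N : nat) : 0 <= q ^+ 2 < 1 -> 0 < x ->
  Hn q 0 x = \sum_(k < N) (-1) ^+ k * (q ^+ 2) ^+ (k.+1 * absz x)%N * Zn q (- (k.+1%:Z))
             + (-1) ^+ N * (q ^+ 2) ^+ (N * absz x)%N * Hn q (- (N%:Z)) x.
Proof.
move=> hp x0; elim: N => [|N IH].
  by rewrite big_ord0 add0r expr0 mul0n expr0 !mul1r.
rewrite big_ord_recr /= IH (Hn_rec _ hp x0).
have -> : - (N%:Z) - 1 = - (N.+1%:Z) by lia.
rewrite -addrA; congr (_ + _).
rewrite mulSn exprD exprS.
set a := (-1) ^+ N; set P := (q ^+ 2) ^+ (N * _)%N; set r := (q ^+ 2) ^+ _.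
rewrite [(-1) ^+ N.+1]exprS -/a.
lra.
Qed.

Lemma twoC k : (2 * 'C(k.+1, 2) = k.+1 * k)%N.
Proof.
elim: k => [|k IH] //; rewrite binS bin1 mulnDr IH; lia.
Qed.

Lemma term_id {R : realType} (q : R) (m k : nat) :
  q ^+ (2 * m)%N * ((-1) ^+ k * q ^+ (k * (k + 2 * m + 1))%N) =
  (-1) ^+ k * (q ^+ 2) ^+ (k.+1 * m)%N * (q ^+ 2) ^+ 'C(k.+1, 2).
Proof.
rewrite mulrCA -mulrA; congr (_ * _).
rewrite -!exprM -exprD -exprD; congr (_ ^+ _).
have := twoC k; lia.
Qed.

Lemma cvg_geom_bound {R : realType} (u : R ^nat) (L r K : R) : 0 <= r < 1 -> 0 <= K ->
  (forall N, `|L - u N| <= K * r ^+ N) -> (u @ \oo --> L)%classic.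
Proof.
move=> /andP[r0 r1] K0 hb; apply/cvgrPdist_le => e e0.
have hr1 : `|r| < 1 by rewrite ger0_norm.
have eK : 0 < e / (K + 1) by rewrite divr_gt0 // ltr_pwDr.
have h' : (\forall N \near \oo, `|0 - r ^+ N| <= e / (K + 1))%classic.
  by have /cvgrPdist_le := cvg_expr hr1; apply.
move: h'; apply: filterS => N; rewrite sub0r normrN ger0_norm ?exprn_ge0 // => hN.
apply: le_trans (hb N) _.
have : K * r ^+ N <= K * (e / (K + 1)) by apply: ler_wpM2l.
move=> h; apply: le_trans h _.
rewrite mulrA ler_pdivrMr ?ltr_pwDr //; nra.
Qed.

Lemma hp_of {R : realType} (q : R) : 0 < q -> q < 1 -> 0 <= q ^+ 2 < 1.
Proof. move=> h0 h1; rewrite sqr_ge0 /=; nra. Qed.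

Lemma Zs_gt0 {R : realType} (q : R) : 0 <= q ^+ 2 < 1 -> 0 < Zs q.
Proof. by move=> hp; apply: (lt_le_trans ltr01); exact: F_Z0. Qed.

Lemma part1 {R : realType} (q : R) (hq0 : 0 < q) (hq1 : q < 1) (x : int) : 0 < x ->
  kink_expect q 0 x =
    - 2^-1 + q ^+ (2 * absz x)%N *
      limn (series (fun k : nat => (-1) ^+ k * q ^+ (k * (k + 2 * absz x + 1))%N)).
Proof.
move=> x0; have hp := hp_of hq0 hq1.
set m := absz x.
have m1 : (1 <= m)%N by rewrite /m; lia.
set t := (fun k : nat => (-1) ^+ k * q ^+ (k * (k + 2 * m + 1))%N).
have Z0 := Zs_gt0 hp.
have Q0 : 0 < q ^+ (2 * m)%N by rewrite exprn_gt0.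
set L := Hs q x / Zs q / q ^+ (2 * m)%N.
have hb : forall N, `|L - series t N| <= (q ^+ (2 * m)%N)^-1 * (q ^+ 2) ^+ N.
  move=> N.
  have e := Hn_iter N hp x0.
  have eS : \sum_(k < N) (-1) ^+ k * (q ^+ 2) ^+ (k.+1 * m)%N * Zn q (- (k.+1%:Z))
            = Zs q * (q ^+ (2 * m)%N * series t N).
    rewrite /series /= big_mkord mulr_sumr mulr_sumr.
    apply: eq_bigr => k _; rewrite /t term_id (Zn_neg _ hp) /Zn /Zs -/(Zn q 0).
    by rewrite mulrA mulrC mulrA.
  set Rm := (-1) ^+ N * (q ^+ 2) ^+ (N * m)%N * Hn q (- (N%:Z)) x in e.
  have eL : L - series t N = Rm / Zs q / q ^+ (2 * m)%N.
    rewrite /L /Hs -/(Hn q 0 x) e eS.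
    apply: (mulIf (lt0r_neq0 Q0)); rewrite mulrBl !divfK ?lt0r_neq0 //.
    apply: (mulIf (lt0r_neq0 Z0)); rewrite mulrBl !divfK ?lt0r_neq0 //.
    lra.
  have hR : `|Rm| <= (q ^+ 2) ^+ N * Zs q.
    rewrite /Rm normrM normrM normrX normrN normr1 expr1n mul1r.
    have g1 : 0 <= (q ^+ 2) ^+ (N * m)%N by rewrite exprn_ge0 // sqr_ge0.
    have g2 : 0 <= Hn q (- (N%:Z)) x by exact: F_ge0.
    rewrite (ger0_norm g1) (ger0_norm g2).
    have h1 : Hn q (- (N%:Z)) x <= Zn q (- (N%:Z)).
      rewrite /Hn /Zn (F_split (n := - (N%:Z)) x hp (@subset_refl _ _)) lerDl.
      exact: F_ge0.
    apply: le_trans (ler_wpM2l _ h1) _; first by rewrite exprn_ge0 // sqr_ge0.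
    rewrite (Zn_neg _ hp) /Zn -/(Zs q) mulrA -exprD.
    apply: ler_wpM2r; first exact: F_ge0.
    apply: ler_wiXn2l; [exact: sqr_ge0 | by move: hp => /andP[_ /ltW] | nia].
  rewrite eL normrM normrM normrV ?unitfE ?lt0r_neq0 // normrV ?unitfE ?lt0r_neq0 //.
  rewrite (ger0_norm (ltW Z0)) (ger0_norm (ltW Q0)).
  rewrite [X in _ <= X](_ : _ = (q ^+ 2) ^+ N * Zs q / Zs q / q ^+ (2 * m)%N); last first.
    by rewrite mulfK ?lt0r_neq0 // mulrC.
  apply: ler_wpM2r; first by rewrite invr_ge0 ltW.
  apply: ler_wpM2r; first by rewrite invr_ge0 ltW.
  exact: hR.
have hcv : (series t @ \oo --> L)%classic.
  apply: (cvg_geom_bound (K := (q ^+ (2 * m)%N)^-1) (r := q ^+ 2)) => //.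
  by rewrite invr_ge0 ltW.
rewrite (cvg_lim _ hcv) // (kinkE _ hp) ifN; last by rewrite -ltNge.
rewrite /L (mulrC (q ^+ (2 * m)%N)) divfK ?lt0r_neq0 //; lra.
Qed.

Lemma EposE {R : realType} (q : R) x : 0 <= q ^+ 2 < 1 -> 0 < x ->
  kink_expect q 0 x = Hs q x / Zs q - 2^-1.
Proof. by move=> hp x0; rewrite (kinkE _ hp) ifN // -ltNge. Qed.

Lemma EnposE {R : realType} (q : R) x : 0 <= q ^+ 2 < 1 -> x <= 0 ->
  kink_expect q 0 x = 1 - Hs q x / Zs q - 2^-1.
Proof.
move=> hp x0; rewrite (kinkE _ hp) x0 mulrBl divff //.
by apply/lt0r_neq0/Zs_gt0.
Qed.

Lemma part2 {R : realType} (q : R) x : 0 <= q ^+ 2 < 1 -> x <= 0 ->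
  kink_expect q 0 x = - kink_expect q 0 (1 - x).
Proof.
move=> hp x0; rewrite (EnposE hp x0) (EposE hp); last by lia.
rewrite -Hs_refl; lra.
Qed.

Lemma Dpos {R : realType} (q : R) a : 0 <= q ^+ 2 < 1 -> 0 < a ->
  0 <= kink_expect q 0 a - kink_expect q 0 (a + 1) <= (q ^+ 2) ^+ absz a.
Proof.
move=> hp a0; rewrite (EposE hp a0) (EposE hp); last by lia.
have Z0 := Zs_gt0 hp.
have d := Hs_dec hp a0.
have b := Hs_bound hp a0.
have g := F_ge0 q (kink_configs 0 `&` [set c | has (a + 1) c])%classic.
rewrite -/(Hs q (a + 1)) in g.
have -> : Hs q a / Zs q - 2^-1 - (Hs q (a + 1) / Zs q - 2^-1) =
          (Hs q a - Hs q (a + 1)) / Zs q by rewrite mulrBl; lra.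
apply/andP; split.
  by apply: divr_ge0; lra.
rewrite ler_pdivrMr //; lra.
Qed.

Unset Implicit Arguments.

Theorem lemmaA (R : realType) (q : R) (hq0 : 0 < q) (hq1 : q < 1) :
  (forall x : int, 0 < x ->
     kink_expect q 0 x =
       - 2^-1 + q ^+ (2 * absz x)%N *
         limn (series (fun k : nat => (-1) ^+ k * q ^+ (k * (k + 2 * absz x + 1))%N)))
  /\ (forall x : int, x <= 0 -> kink_expect q 0 x = - kink_expect q 0 (1 - x))
  /\ (exists C c : R, 0 < C /\ 0 < c /\
        forall m : int,
          0 <= kink_expect q 0 (m - 1) - kink_expect q 0 m
          /\ kink_expect q 0 (m - 1) - kink_expect q 0 m
               <= C * expR (- c * (`|m|%:R))).
Proof.
have hp := hp_of hq0 hq1.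
split; first by move=> x x0; exact: part1.
split; first by move=> x x0; exact: part2.
have p0 : 0 < q ^+ 2 by rewrite exprn_gt0.
have p1 : q ^+ 2 < 1 by case/andP: hp.
exists (q ^+ 2)^-1, (- ln (q ^+ 2)); split; first by rewrite invr_gt0.
split; first by rewrite oppr_gt0 ln_lt0 // p0 p1.
move=> m.
have eE : expR (- - ln (q ^+ 2) * (absz m)%:R) = (q ^+ 2) ^+ absz m.
  by rewrite opprK expRM_natr lnK // posrE.
rewrite eE.
have Z0 := Zs_gt0 hp.
have [m2|m1] := lerP 2 m.
  have := Dpos hp (_ : 0 < m - 1); rewrite subrK => /(_ ltac:(lia)) /andP[h1 h2].
  split => //; apply: le_trans h2 _.
  have -> : absz m = (absz (m - 1)).+1 by lia.
  by rewrite [(q ^+ 2) ^+ (_.+1)]exprS mulrA mulVf ?lt0r_neq0 // mul1r.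
have [m0|m1'] := lerP m 0.
  have hm1 : m - 1 <= 0 by lia.
  rewrite (part2 hp hm1) (part2 hp m0).
  have hpos : 0 < 1 - m by lia.
  have := Dpos hp hpos; rewrite (_ : 1 - m + 1 = 1 - (m - 1)); last by lia.
  move=> /andP[h1 h2].
  split; first lra.
  apply: (le_trans (y := (q ^+ 2) ^+ absz (1 - m))); first lra.
  have -> : absz (1 - m) = (absz m).+1 by lia.
  rewrite [(q ^+ 2) ^+ (_.+1)]exprS ler_pdivlMl // mulrA.
  rewrite -[X in _ <= X]mul1r; apply: ler_wpM2r; first by rewrite exprn_ge0 // ltW.
  by rewrite -expr2 exprn_ile1 // ltW.
have -> : m = 1 by lia.
rewrite (EposE hp (ltr01 : (0 : int) < 1)) (EnposE hp (lexx (0 : int))).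
have h := Hs01 hp.
have g0 := F_ge0 q (kink_configs 0 `&` [set c | has 0 c])%classic.
have g1 := F_ge0 q (kink_configs 0 `&` [set c | has 1 c])%classic.
rewrite -/(Hs q 0) in g0; rewrite -/(Hs q 1) in g1.
have -> : 1 - Hs q 0 / Zs q - 2^-1 - (Hs q 1 / Zs q - 2^-1) =
          (Zs q - Hs q 0 - Hs q 1) / Zs q.
  rewrite !mulrBl divff ?lt0r_neq0 //; lra.
rewrite expr1 mulVf ?lt0r_neq0 //.
split; first by apply: divr_ge0; lra.
rewrite ler_pdivrMr // mul1r; lra.
Qed.
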